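(* Let $A$ satisfy the spectral assumption, $B\in\mathbb{R}^{n\times k}$, and suppose $E_{\mathrm u}^\perp$ and $E_{\mathrm s}$ are $\xi$-close with $\xi\in(0,1)$. Let $\gamma>0$, $\gamma_+>1$, and let $x\in\mathbb{R}^n$ satisfy $\|R_1x\|/\|R_2x\|>\gamma_+$. Let $u\in\mathbb{R}^k$ with $\|u\|\le\alpha\|x\|$, where $$\alpha<\frac{\frac{\gamma_+}{\gamma_++1}\sigma_{\min}(M_1)-\frac{\gamma}{\gamma_+-1}\frac{1}{1-\xi}\|A\|}{\big(1+\frac{\sqrt{2\xi}}{1-\xi}+\frac{\gamma}{1-\xi}\big)\|B\|}.$$ Then $x'=Ax+Bu$ satisfies $\|R_1x'\|/\|R_2x'\|>\gamma$.
   Context: Spectral assumption: $A\in\mathbb{R}^{n\times n}$ diagonalizable with eigenvalues $|\lambda_1|>\cdots\ge|\lambda_k|>1>|\lambda_{k+1}|\ge\cdots\ge|\lambda_n|$. $E_{\mathrm u}$ / $E_{\mathrm s}$: real invariant subspaces associated with $\lambda_1..\lambda_k$ / $\lambda_{k+1}..\lambda_n$. $P_1=Q_1$ has orthonormal columns spanning $E_{\mathrm u}$, $P_2$ orthonormal columns spanning $E_{\mathrm u}^\perp$, $Q_2$ orthonormal columns spanning $E_{\mathrm s}$; $M_1=P_1^\top AP_1$; $Q=[Q_1\ Q_2]$, $Q^{-1}=\begin{bmatrix}R_1\\R_2\end{bmatrix}$. $\xi$-close: $\sigma_{\min}(P_2^\top Q_2)>1-\xi$. $\sigma_{\min}$ is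 the smallest singular value, $\|\cdot\|$ the spectral/Euclidean norm. *)

(* Defs.v *)
From HB Require Import structures.
From mathcomp Require Import all_boot all_order all_algebra.
From mathcomp Require Import complex.
From mathcomp Require Import classical_sets reals.
Set Implicit Arguments. Unset Strict Implicit. Unset Printing Implicit Defensive.
Import Order.TTheory GRing.Theory Num.Theory.
Local Open Scope ring_scope.
Local Open Scope classical_set_scope.

Definition enorm (R : realType) (p : nat) (v : 'cV[R]_p) : R :=
  Num.sqrt (\sum_(i < p) v i 0 ^+ 2).

Definition specnorm (R : realType) (p q : nat) (M : 'M[R]_(p, q)) : R :=
  sup [set enorm (M *m v) | v in [set v : 'cV[R]_q | enorm v = 1]].

Definition sigma_min (R : realType) (p : nat) (M : 'M[R]_p) : R :=
  inf [set enorm (M *m v) | v in [set v : 'cV[R]_p | enorm v = 1]].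

Definition colspan (F : fieldType) (p q : nat) (M : 'M[F]_(p, q)) (v : 'cV[F]_p) : Prop :=
  exists c : 'cV[F]_q, v = M *m c.

Definition orthonormal_cols (R : realType) (p q : nat) (M : 'M[R]_(p, q)) : Prop :=
  M^T *m M = 1%:M.

Definition cplx (R : realType) (p q : nat) (M : 'M[R]_(p, q)) : 'M[R[i]]_(p, q) :=
  map_mx (fun r : R => (r%:C)%C) M.

(* Main.v *)
Require Import Defs.
From HB Require Import structures.
From mathcomp Require Import all_boot all_order all_algebra.
From mathcomp Require Import complex.
From mathcomp Require Import classical_sets reals.
From mathcomp Require Import ring lra.
Import Order.TTheory GRing.Theory Num.Theory.
Local Open Scope ring_scope.
Section Norms.
Set Implicit Arguments. Unset Strict Implicit.
Variable R : realType.

Definition dot p (v w : 'cV[R]_p) : R := \sum_(i < p) v i 0 * w i 0.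

Lemma dotE p (v w : 'cV[R]_p) : (v^T *m w) 0 0 = dot v w.
Proof. by rewrite mxE; apply: eq_bigr => i _; rewrite mxE. Qed.

Lemma dot_ge0 p (v : 'cV[R]_p) : 0 <= dot v v.
Proof. by apply: sumr_ge0 => i _; rewrite -expr2 sqr_ge0. Qed.

Lemma enormE p (v : 'cV[R]_p) : enorm v = Num.sqrt (dot v v).
Proof. by rewrite /enorm /dot; congr Num.sqrt; apply: eq_bigr => i _; rewrite expr2. Qed.

Lemma enorm_ge0 p (v : 'cV[R]_p) : 0 <= enorm v.
Proof. by rewrite enormE sqrtr_ge0. Qed.

Lemma enorm_sq p (v : 'cV[R]_p) : enorm v ^+ 2 = dot v v.
Proof. by rewrite enormE sqr_sqrtr // dot_ge0. Qed.

Lemma dotC p (v w : 'cV[R]_p) : dot v w = dot w v.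
Proof. by apply: eq_bigr => i _; rewrite mulrC. Qed.

Lemma dotDl p (u v w : 'cV[R]_p) : dot (u + v) w = dot u w + dot v w.
Proof. by rewrite /dot -big_split; apply: eq_bigr => i _; rewrite !mxE mulrDl. Qed.

Lemma dotZl p (c : R) (v w : 'cV[R]_p) : dot (c *: v) w = c * dot v w.
Proof. by rewrite /dot mulr_sumr; apply: eq_bigr => i _; rewrite !mxE mulrA. Qed.

Lemma dotNl p (v w : 'cV[R]_p) : dot (- v) w = - dot v w.
Proof. by rewrite -scaleN1r dotZl mulN1r. Qed.

Lemma dot0l p (w : 'cV[R]_p) : dot 0 w = 0.
Proof. by rewrite /dot big1 // => i _; rewrite mxE mul0r. Qed.

Lemma dot_eq0 p (v : 'cV[R]_p) : dot v v = 0 -> v = 0.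
Proof.
move=> /eqP; rewrite psumr_eq0 => [/allP H|i _]; last by rewrite -expr2 sqr_ge0.
apply/colP => i; rewrite mxE.
have /H: i \in index_enum 'I_p by rewrite mem_index_enum.
by rewrite /= -expr2 sqrf_eq0 => /eqP.
Qed.

Lemma enorm_eq0 p (v : 'cV[R]_p) : enorm v = 0 -> v = 0.
Proof. by move=> h; apply: dot_eq0; rewrite -enorm_sq h expr0n. Qed.

Lemma enorm0 p : enorm (0 : 'cV[R]_p) = 0.
Proof. by rewrite enormE dot0l sqrtr0. Qed.

Lemma enormZ p (c : R) (v : 'cV[R]_p) : enorm (c *: v) = `|c| * enorm v.
Proof.
rewrite !enormE dotZl dotC dotZl mulrA -expr2 sqrtrM ?sqr_ge0 //.
by rewrite sqrtr_sqr.
Qed.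

Lemma enormN p (v : 'cV[R]_p) : enorm (- v) = enorm v.
Proof. by rewrite -scaleN1r enormZ normrN1 mul1r. Qed.

Lemma CS p (v w : 'cV[R]_p) : dot v w <= enorm v * enorm w.
Proof.
have [hb|bn0] := eqVneq (enorm w) 0.
  have -> : w = 0 by apply: enorm_eq0.
  by rewrite dotC dot0l enorm0 mulr0.
have [ha|an0] := eqVneq (enorm v) 0.
  have -> : v = 0 by apply: enorm_eq0.
  by rewrite dot0l enorm0 mul0r.
have := dot_ge0 (enorm w *: v - enorm v *: w).
rewrite dotDl dotNl !dotZl !(dotC _ (enorm w *: v - enorm v *: w)) !dotDl !dotNl !dotZl.
rewrite -!enorm_sq (dotC w v) => h.
have hab : 0 < enorm v * enorm w by rewrite mulr_gt0 // lt_def ?an0 ?bn0 enorm_ge0.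
rewrite -(ler_pM2l hab); nra.
Qed.

Lemma sq_le (x y : R) : 0 <= x -> 0 <= y -> x ^+ 2 <= y ^+ 2 -> x <= y.
Proof. move=> hx hy h; rewrite -(ler_sqr hx hy) //. Qed.

Lemma enormD p (v w : 'cV[R]_p) : enorm (v + w) <= enorm v + enorm w.
Proof.
apply: sq_le; rewrite ?addr_ge0 ?enorm_ge0 //.
rewrite enorm_sq dotDl !(dotC _ (v + w)) !dotDl -!enorm_sq (dotC w v).
have := CS v w; nra.
Qed.

Lemma enormB_ge p (v w : 'cV[R]_p) : enorm v - enorm w <= enorm (v + w).
Proof.
have := enormD (v + w) (- w); rewrite addrK enormN; lra.
Qed.

Lemma enorm_iso p q (Q : 'M[R]_(p, q)) (v : 'cV[R]_q) :
  Q^T *m Q = 1%:M -> enorm (Q *m v) = enorm v.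
Proof.
move=> hQ; rewrite !enormE -!dotE trmx_mul mulmxA -(mulmxA v^T) hQ mulmx1 //.
Qed.

Lemma pyth p q r (Q : 'M[R]_(p, q)) (P : 'M[R]_(p, r)) (v : 'cV[R]_p) :
  Q *m Q^T + P *m P^T = 1%:M ->
  enorm (Q^T *m v) ^+ 2 + enorm (P^T *m v) ^+ 2 = enorm v ^+ 2.
Proof.
move=> h; rewrite !enorm_sq -!dotE !trmx_mul !trmxK.
have e : forall X Y : 'M[R]_1, X 0 0 + Y 0 0 = (X + Y) 0 0 by move=> X Y; rewrite mxE.
rewrite e; have -> : v^T *m Q *m (Q^T *m v) + v^T *m P *m (P^T *m v) = v^T *m (Q *m Q^T + P *m P^T) *m v.
  by rewrite mulmxDr mulmxDl !mulmxA.
by rewrite h mulmx1.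
Qed.

Lemma CSabs p (v w : 'cV[R]_p) : (dot v w) ^+ 2 <= dot v v * dot w w.
Proof.
have h1 := CS v w; have h2 := CS (- v) w.
rewrite dotNl enormN in h2.
rewrite -!enorm_sq.
have := enorm_ge0 v; have := enorm_ge0 w; nra.
Qed.

Definition frob p q (M : 'M[R]_(p, q)) := \sum_(i < p) dot (row i M)^T (row i M)^T.

Lemma frob_bound p q (M : 'M[R]_(p, q)) (v : 'cV[R]_q) :
  enorm (M *m v) <= Num.sqrt (frob M) * enorm v.
Proof.
rewrite !enormE -sqrtrM; last by apply: sumr_ge0 => i _; apply: dot_ge0.
rewrite ler_sqrt; last by rewrite mulr_ge0 ?dot_ge0 //; apply: sumr_ge0 => i _; apply: dot_ge0.
rewrite /frob mulr_suml; apply: ler_sum => i _.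
have -> : (M *m v) i 0 = dot (row i M)^T v.
  by rewrite mxE; apply: eq_bigr => j _; rewrite !mxE.
rewrite -expr2; exact: CSabs.
Qed.

Lemma enorm_neq0 p (v : 'cV[R]_p) : v != 0 -> 0 < enorm v.
Proof.
move=> hv; rewrite lt_def enorm_ge0 andbT; apply/eqP => /enorm_eq0 h.
by rewrite h eqxx in hv.
Qed.

Lemma enorm_normalize p (v : 'cV[R]_p) : v != 0 -> enorm ((enorm v)^-1 *: v) = 1.
Proof.
move=> /enorm_neq0 h; rewrite enormZ ger0_norm ?invr_ge0 ?ltW // mulVf //.
by rewrite gt_eqF.
Qed.

Lemma spec_bound p q (M : 'M[R]_(p, q)) (v : 'cV[R]_q) :
  enorm (M *m v) <= specnorm M * enorm v.
Proof.
have [->|hv] := eqVneq v 0; first by rewrite mulmx0 !enorm0 mulr0.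
have hc := enorm_neq0 hv.
have hub : has_ubound [set enorm (M *m w) | w in [set w : 'cV[R]_q | enorm w = 1]].
  exists (Num.sqrt (frob M)) => y [w /= hw <-].
  by have := frob_bound M w; rewrite hw mulr1.
have := ub_le_sup hub (ex_intro2 _ _ _ (enorm_normalize hv) erefl).
rewrite -scalemxAr enormZ ger0_norm; last by rewrite invr_ge0 ltW.
by rewrite ler_pdivrMl // mulrC.
Qed.

Lemma nonzero_vec q : (0 < q)%N -> exists v : 'cV[R]_q, v != 0.
Proof.
move=> hq; exists (const_mx 1); apply/eqP => /matrixP /(_ (Ordinal hq) 0).
by rewrite !mxE; apply/eqP; rewrite oner_eq0.
Qed.

Lemma specnorm_ge0 p q (M : 'M[R]_(p, q)) : (0 < q)%N -> 0 <= specnorm M.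
Proof.
move=> /nonzero_vec [v hv]; have hc := enorm_neq0 hv.
have := spec_bound M v; have := enorm_ge0 (M *m v).
move=> h1 h2; have := le_trans h1 h2; rewrite pmulr_lge0 //.
Qed.

Lemma sigma_bound p (M : 'M[R]_p) (v : 'cV[R]_p) :
  sigma_min M * enorm v <= enorm (M *m v).
Proof.
have [->|hv] := eqVneq v 0; first by rewrite mulmx0 !enorm0 mulr0.
have hc := enorm_neq0 hv.
have hlb : has_lbound [set enorm (M *m w) | w in [set w : 'cV[R]_p | enorm w = 1]].
  by exists 0 => y [w /= hw <-]; apply: enorm_ge0.
have := ge_inf hlb (ex_intro2 _ _ _ (enorm_normalize hv) erefl).
rewrite -scalemxAr enormZ ger0_norm; last by rewrite invr_ge0 ltW.
by rewrite ler_pdivlMl // mulrC.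
Qed.

Lemma sigma_ge0 p (M : 'M[R]_p) : (0 < p)%N -> 0 <= sigma_min M.
Proof.
move=> /nonzero_vec [v hv].
apply: lb_le_inf; first by exists (enorm (M *m ((enorm v)^-1 *: v))), ((enorm v)^-1 *: v) => //; apply: enorm_normalize.
by move=> y [w /= hw <-]; apply: enorm_ge0.
Qed.

Lemma pyth_le p q r (Q : 'M[R]_(p, q)) (P : 'M[R]_(p, r)) (v : 'cV[R]_p) :
  Q *m Q^T + P *m P^T = 1%:M ->
  enorm (Q^T *m v) <= enorm v /\ enorm (P^T *m v) <= enorm v.
Proof.
move=> h; have := pyth v h.
have := enorm_ge0 (Q^T *m v); have := enorm_ge0 (P^T *m v); have := enorm_ge0 v.
move=> h1 h2 h3 e; split; apply: sq_le => //; nra.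
Qed.

End Norms.
Section LinAlg.
Set Implicit Arguments. Unset Strict Implicit.

Lemma lsub_col (C : pzRingType) k m p (V : 'M[C]_(p, k + m)) (e : 'cV[C]_k) :
  lsubmx V *m e = V *m col_mx e 0.
Proof. by rewrite -[V in RHS]hsubmxK mul_row_col mulmx0 addr0. Qed.

Lemma rsub_col (C : pzRingType) k m p (V : 'M[C]_(p, k + m)) (e : 'cV[C]_m) :
  rsubmx V *m e = V *m col_mx 0 e.
Proof. by rewrite -[V in RHS]hsubmxK mul_row_col mulmx0 add0r. Qed.

Lemma diag_col0 (C : pzRingType) k m (lam : 'rV[C]_(k + m)) (e : 'cV[C]_k) :
  exists e', diag_mx lam *m col_mx e 0 = col_mx e' 0.
Proof.
exists (usubmx (diag_mx lam *m col_mx e 0)).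
rewrite -[LHS]vsubmxK; congr col_mx.
apply/matrixP => i j; rewrite mul_diag_mx mxE mxE col_mxEd !mxE mulr0 //.
Qed.

Lemma diag_0col (C : pzRingType) k m (lam : 'rV[C]_(k + m)) (e : 'cV[C]_m) :
  exists e', diag_mx lam *m col_mx 0 e = col_mx 0 e'.
Proof.
exists (dsubmx (diag_mx lam *m col_mx 0 e)).
rewrite -[LHS]vsubmxK; congr col_mx.
apply/matrixP => i j; rewrite mul_diag_mx mxE mxE col_mxEu !mxE mulr0 //.
Qed.

Lemma invar_l (C : fieldType) k m (V : 'M[C]_(k + m)) lam AA (z : 'cV[C]_(k+m)) :
  V \in unitmx -> AA = V *m diag_mx lam *m invmx V ->
  colspan (lsubmx V) z -> colspan (lsubmx V) (AA *m z).
Proof.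
move=> hV -> [e ->]; rewrite lsub_col.
have [e' he'] := diag_col0 lam e.
exists e'; rewrite lsub_col -he' -!mulmxA; congr (_ *m _).
by rewrite mulKmx.
Qed.

Lemma invar_r (C : fieldType) k m (V : 'M[C]_(k + m)) lam AA (z : 'cV[C]_(k+m)) :
  V \in unitmx -> AA = V *m diag_mx lam *m invmx V ->
  colspan (rsubmx V) z -> colspan (rsubmx V) (AA *m z).
Proof.
move=> hV -> [e ->]; rewrite rsub_col.
have [e' he'] := diag_0col lam e.
exists e'; rewrite rsub_col -he' -!mulmxA; congr (_ *m _).
by rewrite mulKmx.
Qed.

Variable R : realType.

Lemma cplxM p q r (M : 'M[R]_(p,q)) (N : 'M[R]_(q,r)) : cplx (M *m N) = cplx M *m cplx N.
Proof. by rewrite /cplx map_mxM. Qed.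

Lemma cplx_eq0 p q (M : 'M[R]_(p,q)) : cplx M = 0 -> M = 0.
Proof.
move=> /matrixP h; apply/matrixP => i j; have := h i j; rewrite !mxE => /eqP.
by rewrite (fmorph_eq0 (real_complex R)) => /eqP.
Qed.

Lemma invar_Q p n (Q : 'M[R]_(n, p)) (A : 'M[R]_n) (c : 'cV[R]_p) :
  orthonormal_cols Q ->
  (forall y, colspan Q y -> colspan Q (A *m y)) ->
  A *m (Q *m c) = Q *m (Q^T *m A *m Q *m c).
Proof.
move=> hQ hinv; have [d hd] := hinv (Q *m c) (ex_intro _ c erefl).
by rewrite -!mulmxA hd [Q^T *m (Q *m d)]mulmxA (hQ : Q^T *m Q = 1%:M) mul1mx.
Qed.

End LinAlg.
Lemma final_ineq (R : realType) (s NA NB xi g gp S nx na nb nu alpha la lb : R) :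
  0 < xi -> xi < 1 -> 0 < g -> 1 < gp -> 0 <= s -> 0 <= NA -> 0 <= NB -> 0 <= S ->
  0 <= nb -> 0 <= nu -> gp * nb < na -> nx <= na + nb -> na - nb <= nx ->
  nu <= alpha * nx ->
  alpha < (gp / (gp + 1) * s - g / (gp - 1) * (1 / (1 - xi)) * NA)
     / ((1 + S / (1 - xi) + g / (1 - xi)) * NB) ->
  lb <= NA * nb + NB * nu / (1 - xi) ->
  s * na - (1 + S / (1 - xi)) * NB * nu <= la ->
  g * lb < la.
Proof.
move=> hxi0 hxi1 hg hgp hs hNA hNB hS hnb hnu hab hx1 hx2 hu hal hlb hla.
set t := 1 / (1 - xi) in hal.
have hxi : 0 < 1 - xi by lra.
have ht : t * (1 - xi) = 1 by rewrite /t mul1r mulVf // gt_eqF.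
have ht0 : 0 < t by rewrite /t divr_gt0.
have ht1 : 1 <= t by nra.
have eS : S / (1 - xi) = S * t by rewrite /t mul1r.
have eg : g / (1 - xi) = g * t by rewrite /t mul1r.
have eN : NB * nu / (1 - xi) = NB * nu * t by rewrite /t mul1r.
rewrite eS eg in hal; rewrite eN in hlb; rewrite eS in hla.
set p1 := gp / (gp + 1) in hal.
set p2 := g / (gp - 1) in hal.
have hgp0 : 0 < gp by lra.
have hp1 : p1 * (gp + 1) = gp by rewrite /p1 divfK // gt_eqF //; lra.
have hp2 : p2 * (gp - 1) = g by rewrite /p2 divfK // gt_eqF // subr_gt0.
have hp10 : 0 <= p1 by rewrite /p1 divr_ge0 // ltW //; lra.
have hp20 : 0 <= p2 by rewrite /p2 divr_ge0 ?ltW // subr_gt0.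
have hna : 0 < na by nra.
have hnx : 0 < nx by nra.
set den := (1 + S * t + g * t) * NB in hal.
have hden0 : 0 <= den.
  rewrite /den mulr_ge0 //; have : 0 <= S * t by rewrite mulr_ge0 // ltW.
  have : 0 <= g * t by rewrite mulr_ge0 // ltW.
  lra.
have [hd0|hdpos] := eqVneq den 0.
  rewrite hd0 invr0 mulr0 in hal; nra.
have hdp : 0 < den by rewrite lt_def hdpos hden0.
move: hal; rewrite ltr_pdivlMr // => hal.
have h1 : den * nu < (p1 * s - p2 * t * NA) * nx by nra.
have h2 : p1 * nx <= na by nra.
have h4 : (gp - 1) * nb <= nx by lra.
have h5 : g * nb <= p2 * nx by rewrite -hp2 -mulrA ler_wpM2l.
have h6 : p2 * nx <= p2 * t * nx by rewrite -mulrA ler_wpM2l // ler_peMl // ltW.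
have h7 : g * NA * nb <= p2 * t * NA * nx.
  have : g * nb * NA <= p2 * t * nx * NA by rewrite ler_wpM2r //; lra.
  by rewrite mulrAC [X in _ <= X]mulrAC.
have h8 : p1 * s * nx <= s * na.
  have : p1 * nx * s <= na * s by rewrite ler_wpM2r.
  by rewrite mulrAC [X in _ <= X]mulrC.
have h9 : g * lb <= g * (NA * nb + NB * nu * t) by rewrite ler_wpM2l // ltW.
have e10 : den * nu = NB * nu + S * t * NB * nu + g * (NB * nu * t) by rewrite /den; ring.
have e11 : (p1 * s - p2 * t * NA) * nx = p1 * s * nx - p2 * t * NA * nx by ring.
have e12 : (1 + S * t) * NB * nu = NB * nu + S * t * NB * nu by ring.
rewrite e12 in hla; rewrite e10 e11 in h1.
lra.
Qed.
Theorem mainTheorem11 (R : realType) (k m : nat) (hk : (0 < k)%N) (hm : (0 < m)%N)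
  (A : 'M[R]_(k + m))
  (* spectral assumption: A = V diag(lam) V^{-1} over C, first k eigenvalues
     of modulus > 1, last m of modulus < 1 *)
  (V : 'M[R[i]]_(k + m)) (lam : 'rV[R[i]]_(k + m))
  (hV : V \in unitmx)
  (hAV : cplx A = V *m diag_mx lam *m invmx V)
  (hlu : forall i : 'I_k, 1 < `|lam 0 (lshift m i)|)
  (hls : forall j : 'I_m, `|lam 0 (rshift k j)| < 1)
  (* P1 = Q1 : orthonormal basis of E_u *)
  (Q1 : 'M[R]_(k + m, k))
  (hQ1o : orthonormal_cols Q1)
  (hQ1 : forall x : 'cV[R]_(k + m),
      colspan Q1 x <-> colspan (lsubmx V) (cplx x))
  (* P2 : orthonormal basis of E_u^perp *)
  (P2 : 'M[R]_(k + m, m))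
  (hP2o : orthonormal_cols P2)
  (hP2 : forall x : 'cV[R]_(k + m),
      colspan P2 x <-> (forall y : 'cV[R]_(k + m), colspan Q1 y -> y^T *m x = 0))
  (* Q2 : orthonormal basis of E_s *)
  (Q2 : 'M[R]_(k + m, m))
  (hQ2o : orthonormal_cols Q2)
  (hQ2 : forall x : 'cV[R]_(k + m),
      colspan Q2 x <-> colspan (rsubmx V) (cplx x))
  (B : 'M[R]_(k + m, k))
  (xi : R) (hxi0 : 0 < xi) (hxi1 : xi < 1)
  (hclose : 1 - xi < sigma_min (P2^T *m Q2))
  (gam gamp : R) (hgam : 0 < gam) (hgamp : 1 < gamp)
  (x : 'cV[R]_(k + m))
  (hx : gamp * enorm (dsubmx (invmx (row_mx Q1 Q2)) *m x)
        < enorm (usubmx (invmx (row_mx Q1 Q2)) *m x))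
  (u : 'cV[R]_k) (alpha : R)
  (hu : enorm u <= alpha * enorm x)
  (halpha : alpha <
     (gamp / (gamp + 1) * sigma_min (Q1^T *m A *m Q1)
       - gam / (gamp - 1) * (1 / (1 - xi)) * specnorm A)
     / ((1 + Num.sqrt (2 * xi) / (1 - xi) + gam / (1 - xi)) * specnorm B)) :
  let x' := A *m x + B *m u in
  gam * enorm (dsubmx (invmx (row_mx Q1 Q2)) *m x')
    < enorm (usubmx (invmx (row_mx Q1 Q2)) *m x').
Proof.
cbv zeta; set x' := A *m x + B *m u.
have hxi : 0 < 1 - xi by lra.
have hQP : Q1^T *m P2 = 0.
  apply/matrixP => i j.
  have h := (proj1 (hP2 (P2 *m delta_mx j 0))) (ex_intro _ _ erefl) (Q1 *m delta_mx i 0) (ex_intro _ _ erefl).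
  move/matrixP: h => /(_ 0 0).
  rewrite trmx_mul trmx_delta mulmxA -(mulmxA (delta_mx 0 i)) -rowE -colE !mxE.
  done.
have hQ1o' : Q1^T *m Q1 = 1%:M by exact: hQ1o.
have hP2o' : P2^T *m P2 = 1%:M by exact: hP2o.
have hQ2o' : Q2^T *m Q2 = 1%:M by exact: hQ2o.
have hPQ : P2^T *m Q1 = 0 by rewrite -[Q1]trmxK -trmx_mul hQP trmx0.
have hWW : Q1 *m Q1^T + P2 *m P2^T = 1%:M.
  have h : (row_mx Q1 P2)^T *m row_mx Q1 P2 = 1%:M.
    by rewrite tr_row_mx mul_col_row hQ1o' hP2o' hQP hPQ -scalar_mx_block.
  by have := mulmx1C h; rewrite tr_row_mx mul_row_col.
have hinv1 : forall c : 'cV[R]_k, A *m (Q1 *m c) = Q1 *m (Q1^T *m A *m Q1 *m c).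
  move=> c; apply: invar_Q => //  => y /hQ1 hy; apply/hQ1.
  by rewrite cplxM; apply: invar_l hV hAV hy.
have hinv2 : forall c : 'cV[R]_m, A *m (Q2 *m c) = Q2 *m (Q2^T *m A *m Q2 *m c).
  move=> c; apply: invar_Q => //  => y /hQ2 hy; apply/hQ2.
  by rewrite cplxM; apply: invar_r hV hAV hy.
have hinj : forall c : 'cV[R]_(k + m), row_mx Q1 Q2 *m c = 0 -> c = 0.
  move=> c; rewrite -[c]vsubmxK mul_row_col => h0.
  set c1 := usubmx c; set c2 := dsubmx c.
  have e2 : Q2 *m (- c2) = Q1 *m c1 by rewrite mulmxN; apply/eqP; rewrite eq_sym -subr_eq0 opprK h0.
  have [e1 he1] := proj1 (hQ1 (Q1 *m c1)) (ex_intro _ c1 erefl).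
  have [f1 hf1] := proj1 (hQ2 (Q1 *m c1)) (ex_intro _ (- c2) (esym e2)).
  rewrite lsub_col in he1; rewrite rsub_col in hf1.
  have : col_mx e1 0 = col_mx 0 f1.
    by rewrite -(mulKmx hV (col_mx e1 0)) -he1 hf1 mulKmx.
  move=> /eq_col_mx [he0 _].
  rewrite he0 col_mx0 mulmx0 in he1.
  have hy : Q1 *m c1 = 0 by apply: cplx_eq0.
  have hc1 : c1 = 0 by rewrite -[c1]mul1mx -hQ1o' -mulmxA hy mulmx0.
  have hc2 : c2 = 0.
    by rewrite -[c2]mul1mx -hQ2o' -mulmxA -[c2]opprK mulmxN e2 hy oppr0 mulmx0.
  by rewrite hc1 hc2 col_mx0.
have hT : row_mx Q1 Q2 \in unitmx.
  rewrite -unitmx_tr -row_free_unit -kermx_eq0; apply/eqP.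
  set K := kermx _.
  have hK : row_mx Q1 Q2 *m K^T = 0 by rewrite -[row_mx Q1 Q2]trmxK -trmx_mul mulmx_ker trmx0.
  rewrite -[K]trmxK; apply/matrixP => i j; rewrite mxE [RHS]mxE.
  have := hinj (col i K^T); rewrite colE mulmxA hK mul0mx => /(_ erefl) /matrixP /(_ j 0).
  by rewrite -colE !mxE.
set Ti := invmx (row_mx Q1 Q2).
have hdec : forall y : 'cV[R]_(k + m), Q1 *m (usubmx Ti *m y) + Q2 *m (dsubmx Ti *m y) = y.
  by move=> y; rewrite -mul_row_col mul_usub_mx mul_dsub_mx vsubmxK mulKVmx.
have huniq : forall (y : 'cV[R]_(k + m)) a b, Q1 *m a + Q2 *m b = y ->
    usubmx Ti *m y = a /\ dsubmx Ti *m y = b.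
  move=> y a b <-; rewrite -mul_row_col mul_usub_mx mul_dsub_mx mulKmx //.
  by rewrite col_mxKu col_mxKd.
have hsig0 : 0 <= sigma_min (P2^T *m Q2) by lra.
have hbP : forall b : 'cV[R]_m, (1 - xi) * enorm b <= enorm (P2^T *m Q2 *m b).
  move=> b; apply: le_trans (sigma_bound _ b).
  by rewrite ler_wpM2r ?enorm_ge0 // ltW.
have hb : forall y, (1 - xi) * enorm (dsubmx Ti *m y) <= enorm y.
  move=> y; set b := dsubmx Ti *m y.
  have e : P2^T *m y = P2^T *m Q2 *m b.
    by rewrite -{1}(hdec y) mulmxDr mulmxA hPQ mul0mx add0r mulmxA.
  apply: le_trans (hbP b) _; rewrite -e.
  by case: (pyth_le y hWW).
have hb' : forall y, enorm (dsubmx Ti *m y) <= enorm y / (1 - xi).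
  by move=> y; rewrite ler_pdivlMr // mulrC.
have ha : forall y, enorm (usubmx Ti *m y) <= (1 + Num.sqrt (2 * xi) / (1 - xi)) * enorm y.
  move=> y; set a := usubmx Ti *m y; set b := dsubmx Ti *m y.
  have e : a = Q1^T *m y - Q1^T *m (Q2 *m b).
    by rewrite -{1}(hdec y) mulmxDr mulmxA hQ1o' mul1mx addrK.
  have h1 : enorm (Q1^T *m (Q2 *m b)) <= Num.sqrt (2 * xi) * enorm b.
    apply: sq_le; rewrite ?mulr_ge0 ?sqrtr_ge0 ?enorm_ge0 //.
    have hp := pyth (Q2 *m b) hWW; rewrite (enorm_iso b hQ2o') in hp.
    have h4 := hbP b; rewrite -mulmxA in h4.
    have h3 := enorm_ge0 b; have h2 := enorm_ge0 (P2^T *m (Q2 *m b)).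
    have h2x : Num.sqrt (2 * xi) ^+ 2 = 2 * xi by rewrite sqr_sqrtr // mulr_ge0 // ltW.
    rewrite exprMn h2x.
    have h5 : ((1 - xi) * enorm b) ^+ 2 <= enorm (P2^T *m (Q2 *m b)) ^+ 2.
      have h0 : 0 <= (1 - xi) * enorm b by rewrite mulr_ge0 // ltW.
      nra.
    have h6 : 0 <= (xi * enorm b) ^+ 2 by apply: sqr_ge0.
    rewrite exprMn in h5; rewrite exprMn in h6; nra.
  have h2 : Num.sqrt (2 * xi) * enorm b <= Num.sqrt (2 * xi) / (1 - xi) * enorm y.
    by rewrite -mulrA ler_wpM2l ?sqrtr_ge0 // mulrC; apply: hb'.
  have h3 := enormD (Q1^T *m y) (- (Q1^T *m (Q2 *m b))).
  rewrite enormN -e in h3.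
  have := (pyth_le y hWW).1; lra.
set a := usubmx Ti *m x; set b := dsubmx Ti *m x.
have ex' : Q1 *m (Q1^T *m A *m Q1 *m a + usubmx Ti *m (B *m u))
         + Q2 *m (Q2^T *m A *m Q2 *m b + dsubmx Ti *m (B *m u)) = x'.
  rewrite /x' -{1}(hdec x) -[in RHS](hdec (B *m u)) -/a -/b !mulmxDr hinv1 hinv2.
  by rewrite addrACA.
have [-> ->] := huniq _ _ _ ex'.
have hNA : 0 <= specnorm A by apply: specnorm_ge0; rewrite addn_gt0 hk.
have hNB : 0 <= specnorm B by apply: specnorm_ge0.
have hs : 0 <= sigma_min (Q1^T *m A *m Q1) by apply: sigma_ge0.
have hlb : enorm (Q2^T *m A *m Q2 *m b + dsubmx Ti *m (B *m u))
    <= specnorm A * enorm b + specnorm B * enorm u / (1 - xi).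
  apply: le_trans (enormD _ _) _; apply: lerD.
    rewrite -(enorm_iso _ hQ2o') -hinv2 -(enorm_iso b hQ2o'); exact: spec_bound.
  apply: le_trans (hb' _) _; apply: ler_wpM2r; [by rewrite invr_ge0 ltW | exact: spec_bound].
have hla : sigma_min (Q1^T *m A *m Q1) * enorm a
     - (1 + Num.sqrt (2 * xi) / (1 - xi)) * specnorm B * enorm u
    <= enorm (Q1^T *m A *m Q1 *m a + usubmx Ti *m (B *m u)).
  apply: le_trans (enormB_ge _ _); apply: lerB; first exact: sigma_bound.
  apply: le_trans (ha _) _; rewrite -mulrA ler_wpM2l ?spec_bound //.
  by rewrite addr_ge0 ?ler01 // divr_ge0 ?sqrtr_ge0 // ltW.
have hx1 : enorm x <= enorm a + enorm b.
  by rewrite -{1}(hdec x) -(enorm_iso a hQ1o') -(enorm_iso b hQ2o') enormD.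
have hx2 : enorm a - enorm b <= enorm x.
  by rewrite -{1}(hdec x) -(enorm_iso a hQ1o') -(enorm_iso b hQ2o'); apply: enormB_ge.
apply: (final_ineq hxi0 hxi1 hgam hgamp hs hNA hNB (sqrtr_ge0 _) (enorm_ge0 b) (enorm_ge0 u) hx hx1 hx2 hu halpha hlb hla).
Qed.
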